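(* Let $(X,\ast,u,d)$ be a finite block GL-rack, let $\Delta=\alpha_1\cdots\alpha_n$ be the disjoint cycle decomposition of its diagonal map (fixed points counted as cycles of length $1$), let $A_i=\operatorname{supp}(\alpha_i)$, and let $c=|A_i|$ (the common length). Then: (1) $x\ast y=x\ast y'$ for all $i,j$, all $x\in A_i$ and all $y,y'\in A_j$; (2) $x\ast y\neq x'\ast y$ for all $i,j$, all $x\neq x'\in A_i$ and all $y\in A_j$. Consequently, for all $i,j\in\{1,\dots,n\}$ there is $k\in\{1,\dots,n\}$ with $A_i\ast A_j:=\{x\ast y: x\in A_i,y\in A_j\}=A_k$, and in particular $A_i\ast A_i=A_i$ for every $i$.
   Context: A rack is a set $X$ with a binary operation $\ast$ such that for every $y\in X$ the map $x\mapsto x\ast y$ is a bijection of $X$ and $(x\ast y)\ast z=(x\ast z)\ast(y\ast z)$ for all $x,y,z$. A GL-rack is a quadruple $(X,\ast,u,d)$ where $(X,\ast)$ is a rack and $u,d\colon X\to X$ are maps such that for all $x,y\in X$: $u(d(x\ast x))=d(u(x\ast x))=x$; $u(x\ast y)=u(x)\ast y$ and $d(x\ast y)=d(x)\ast y$; $x\ast u(y)=x\ast d(y)=x\ast y$. The diagonal map is $\Delta\colon X\to X$, $\Delta(x)=x\ast x$; for a finite GL-rack it is a bijection (a rack automorphism) and $\Delta=(u\circ d)^{-1}$. A finite GL-rack is a block GL-rack if all cycles in the disjoint cycle decomposition of the permutation $\Delta$ (including cycles of length $1$) have the same length. *)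

(* Defs.v *)
From mathcomp Require Import all_boot.
Set Implicit Arguments. Unset Strict Implicit. Unset Printing Implicit Defensive.

Definition is_rack (X : finType) (op : X -> X -> X) : Prop :=
  (forall y : X, bijective (fun x => op x y)) /\
  (forall x y z : X, op (op x y) z = op (op x z) (op y z)).

Definition is_GLrack (X : finType) (op : X -> X -> X) (u d : X -> X) : Prop :=
  is_rack op /\
  (forall x : X, u (d (op x x)) = x /\ d (u (op x x)) = x) /\
  (forall x y : X, u (op x y) = op (u x) y /\ d (op x y) = op (d x) y) /\
  (forall x y : X, op x (u y) = op x y /\ op x (d y) = op x y).

Definition diag (X : finType) (op : X -> X -> X) : X -> X := fun x => op x x.

(* Support of the cycle of Delta through x (Delta is a permutation for a
   finite GL-rack, so these sets are exactly the supports of the cycles in the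
   disjoint cycle decomposition of Delta, fixed points included). *)
Definition cyc (X : finType) (op : X -> X -> X) (x : X) : {set X} :=
  [set y | fconnect (diag op) x y].

Definition is_block_GLrack (X : finType) (op : X -> X -> X) (u d : X -> X) : Prop :=
  is_GLrack op u d /\ (forall x y : X, #|cyc op x| = #|cyc op y|).

Definition setop (X : finType) (op : X -> X -> X) (A B : {set X}) : {set X} :=
  [set op x y | x in A, y in B].

(* Main.v *)
Require Import Defs.
From mathcomp Require Import all_boot.

Section S.
Variables (X : finType) (op : X -> X -> X).
Hypothesis bij : forall y : X, bijective (fun x => op x y).
Hypothesis sd : forall x y z : X, op (op x y) z = op (op x z) (op y z).

Lemma RD x y : op x (op y y) = op x y.
Proof.
have [g _ gK] := bij y.
by rewrite -(gK x) /= -sd.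
Qed.

Lemma iterRD n x y : op x (iter n (diag op) y) = op x y.
Proof. by elim: n => //= n IH; rewrite /diag RD. Qed.

Lemma iterD n x y : iter n (diag op) (op x y) = op (iter n (diag op) x) y.
Proof. by elim: n => //= n ->; rewrite /diag -sd. Qed.

Lemma cyc_iter b y : y \in cyc op b -> y = iter (findex (diag op) b y) (diag op) b.
Proof. by rewrite inE => /iter_findex ->. Qed.

Lemma part1 b x y : y \in cyc op b -> op x y = op x b.
Proof. by move/cyc_iter => ->; rewrite iterRD. Qed.

Lemma setop_cyc a b : setop op (cyc op a) (cyc op b) = cyc op (op a b).
Proof.
apply/setP => z; apply/imset2P/idP.
- case=> x y Hx Hy ->; rewrite (part1 _ x _ Hy) (cyc_iter _ _ Hx) -iterD inE.
  exact: fconnect_iter.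
- rewrite inE => /iter_findex <-; rewrite iterD.
  exists (iter (findex (diag op) (op a b) z) (diag op) a) b => //.
  + by rewrite inE fconnect_iter.
  + by rewrite inE connect0.
Qed.
End S.

Theorem proposition3p3 (X : finType) (op : X -> X -> X) (u d : X -> X) :
  is_block_GLrack op u d ->
  (* (1) *)
  (forall (a b x y y' : X), x \in cyc op a -> y \in cyc op b -> y' \in cyc op b ->
      op x y = op x y') /\
  (* (2) *)
  (forall (a b x x' y : X), x \in cyc op a -> x' \in cyc op a -> x != x' ->
      y \in cyc op b -> op x y != op x' y) /\
  (* consequence *)
  (forall a b : X, exists k : X, setop op (cyc op a) (cyc op b) = cyc op k) /\
  (forall a : X, setop op (cyc op a) (cyc op a) = cyc op a).
Proof.
move=> [[[bij sd] [ud _]] _].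
split; first by move=> a b x y y' _ Hy Hy'; rewrite (part1 _ _ bij sd _ x _ Hy) (part1 _ _ bij sd _ x _ Hy').
split.
  move=> a b x x' y _ _ ne _; apply: contra ne => /eqP H; apply/eqP.
  exact: (bij_inj (bij y) H).
split; first by move=> a b; exists (op a b); exact: (setop_cyc _ _ bij sd).
move=> a; rewrite (setop_cyc _ _ bij sd); apply/setP => z; rewrite !inE.
have injD : injective (diag op).
  by move=> x y H; rewrite -[x](proj1 (ud x)) -[y](proj1 (ud y)); rewrite /diag in H; rewrite H.
by rewrite -[op a a]/(diag op a) -same_fconnect1.
Qed.
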